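(* Let $K$ be a field, $X$ a set, $>$ a semigroup well-ordering on $X^\dagger$, and $F=(F_T,F_P)$ with $F_T\subseteq K[\dashv\! X^\dagger]$ and $F_P\subseteq K[X^\dagger]$. If $f\in F$ is such that $f\to_{F\setminus\{f\}}0$, then the relations $\stackrel{*}{\to}_F$ and $\stackrel{*}{\to}_{F\setminus\{f\}}$ on $K[\dashv\! X^\dagger]$ coincide.
   Context: $X^\dagger$ is the free semigroup of nonempty words on $X$, $X^*$ the free monoid (empty word $id$), $K[X^\dagger]$ the free noncommutative $K$-algebra. A semigroup well-ordering is a well-ordering $>$ on $X^\dagger$ with $m_1>m_2\Rightarrow um_1v>um_2v$ for all $u,v\in X^*$. For a nonzero polynomial, $\mathtt{LT}$ is its largest term and $\mathtt{LC}$ its coefficient. The paper assumes all polynomials are monic (leading coefficient $1$). Tagged polynomials: $\dashv$ is a symbol; $K[\dashv\! X^\dagger]$ is the $K$-vector space with basis the tagged terms $\dashv\! m$ ($m\in X^\dagger$), a right $K[X^\dagger]$-module via $(\dashv\! m)w=\dashv\!(mw)$. For $p=\sum k_im_i\in K[X^\dagger]$, $w\in X^*$: $\dashv\! w\,p:=\sum k_i\dashv\!(wm_i)$. Tagged terms are ordered by $\dashv\! m_1>\dashv\! m_2\iff m_1>m_2$. Reduction of tagged polynomials by a mixed set $G=(G_T,G_P)$: $g\to_G g-k g_iv$ if $g_i\in G_T$, $v\in X^*$ and $\mathtt{LT}(g_i)v$ occurs in $g$ with coefficient $k\neq0$; and $g\to_G g-k\dashv\! w\,g_i\,v$ if $g_i\in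 G_P$, $w,v\in X^*$ and $\dashv\!(w\,\mathtt{LT}(g_i)\,v)$ occurs in $g$ with coefficient $k\neq0$. An untagged $p\in K[X^\dagger]$ is reduced by $G$ via $p\to p-k\,wg_iv$ for $g_i\in G_P$, $w,v\in X^*$, when $w\,\mathtt{LT}(g_i)\,v$ occurs in $p$ with coefficient $k\ne0$. $\stackrel{*}{\to}$ denotes reflexive transitive closure. *)

(* Defs.v *)
From HB Require Import structures.
From mathcomp Require Import all_boot all_algebra.
From Stdlib Require Import Relations.
From Stdlib Require List.
Set Implicit Arguments. Unset Strict Implicit. Unset Printing Implicit Defensive.
Import GRing.Theory.
Local Open Scope ring_scope.

Section MixedReduction.
Variables (K : fieldType) (X : Type).

(* Words: seq X; X^dagger = nonempty words, id = [::].
   An (untagged) polynomial in K[X^dagger], resp. a tagged polynomial in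
   K[-| X^dagger], is represented by its coefficient function seq X -> K
   (for a tagged polynomial, the value at m is the coefficient of -| m). *)
Definition coeffs := seq X -> K.

Definition is_poly (p : coeffs) : Prop :=
  p [::] = 0 /\ exists l : list (seq X), forall m, p m <> 0 -> Stdlib.Lists.List.In m l.

Definition semigroup_wellorder (gt : seq X -> seq X -> Prop) : Prop :=
  [/\ (forall m, m <> [::] -> ~ gt m m),
      (forall a b c, a <> [::] -> b <> [::] -> c <> [::] ->
          gt a b -> gt b c -> gt a c),
      (forall a b, a <> [::] -> b <> [::] -> a <> b -> gt a b \/ gt b a),
      well_founded (fun a b => [/\ a <> [::], b <> [::] & gt b a]) &
      (forall m1 m2 u v, m1 <> [::] -> m2 <> [::] ->
          gt m1 m2 -> gt (u ++ m1 ++ v) (u ++ m2 ++ v))].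

Definition is_LT (gt : seq X -> seq X -> Prop) (p : coeffs) (m : seq X) : Prop :=
  [/\ m <> [::], p m <> 0 & forall m', p m' <> 0 -> m' = m \/ gt m m'].

Definition is_monic gt (p : coeffs) : Prop := exists m, is_LT gt p m /\ p m = 1.

(* g' = g - k * (w h v)   (or  g - k * (-| w h v)  in the tagged case);
   stated coefficientwise, using injectivity of m0 |-> w ++ m0 ++ v *)
Definition sub_shift (g g' : coeffs) (k : K) (w : seq X) (h : coeffs) (v : seq X) : Prop :=
  (forall m0, g' (w ++ m0 ++ v) = g (w ++ m0 ++ v) - k * h m0) /\
  (forall m, (forall m0, m <> w ++ m0 ++ v) -> g' m = g m).

Record mset := MSet { mT : coeffs -> Prop ; mP : coeffs -> Prop }.

Definition tred gt (G : mset) (g g' : coeffs) : Prop :=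
  (exists gi, mT G gi /\ exists v m, is_LT gt gi m /\ g (m ++ v) <> 0 /\
      sub_shift g g' (g (m ++ v)) [::] gi v) \/
  (exists gi, mP G gi /\ exists w v m, is_LT gt gi m /\ g (w ++ m ++ v) <> 0 /\
      sub_shift g g' (g (w ++ m ++ v)) w gi v).

Definition ured gt (G : mset) (p p' : coeffs) : Prop :=
  exists gi, mP G gi /\ exists w v m, is_LT gt gi m /\ p (w ++ m ++ v) <> 0 /\
      sub_shift p p' (p (w ++ m ++ v)) w gi v.

Inductive melem := TagE of coeffs | PolE of coeffs.

Definition in_mset (F : mset) (f : melem) : Prop :=
  match f with TagE g => mT F g | PolE p => mP F p end.

Definition mremove (F : mset) (f : melem) : mset :=
  match f with
  | TagE g => MSet (fun h => mT F h /\ h <> g) (mP F)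
  | PolE p => MSet (mT F) (fun h => mP F h /\ h <> p)
  end.

Definition red_to_zero gt (G : mset) (f : melem) : Prop :=
  match f with
  | TagE g => tred gt G g (fun _ => 0)
  | PolE p => ured gt G p (fun _ => 0)
  end.

Definition tred_star gt (G : mset) : coeffs -> coeffs -> Prop :=
  clos_refl_trans coeffs (tred gt G).

End MixedReduction.

(* Main.v *)
Require Import Defs.
From mathcomp Require Import all_boot all_algebra.
From Stdlib Require Import Relations Classical.
Import GRing.Theory.
Local Open Scope ring_scope.
Set Implicit Arguments.

Lemma LT_unique (K : fieldType) (X : Type) (gt : seq X -> seq X -> Prop)
  (p : coeffs K X) a b :
  semigroup_wellorder gt -> is_LT gt p a -> is_LT gt p b -> a = b.
Proof.
case=> Hirr Htr _ _ _ [Ha0 Hpa Ha] [Hb0 Hpb Hb].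
case: (Ha b Hpb) => [E|Hab]; first by rewrite E.
case: (Hb a Hpa) => [//|Hba].
exfalso; apply: (Hirr a Ha0); exact: (Htr a b a Ha0 Hb0 Ha0 Hab Hba).
Qed.

Lemma monic_LT (K : fieldType) (X : Type) (gt : seq X -> seq X -> Prop)
  (p : coeffs K X) m :
  semigroup_wellorder gt -> is_monic gt p -> is_LT gt p m -> p m = 1.
Proof.
move=> Hord [m' [H1 H2]] H; by rewrite (LT_unique Hord H H1).
Qed.

Lemma sub_shift0 (K : fieldType) (X : Type) (f gi : coeffs K X) c w v :
  sub_shift f (fun _ => 0) c w gi v ->
  (forall m0, f (w++m0++v) = c * gi m0) /\
  (forall m, (forall m0, m <> w++m0++v) -> f m = 0).
Proof.
case=> H1 H2; split => [m0|m Hm].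
  move: (H1 m0) => /= /esym /eqP; rewrite subr_eq0 => /eqP //.
by rewrite -(H2 m Hm).
Qed.

Lemma shift_comp (K : fieldType) (X : Type) (g g' f gi : coeffs K X) k w2 v2 c w v :
  sub_shift f (fun _ => 0) c w gi v -> sub_shift g g' k w2 f v2 ->
  sub_shift g g' (k*c) (w2++w) gi (v++v2).
Proof.
move=> /sub_shift0 [F1 F2] [G1 G2]; split.
  move=> m0.
  have -> : (w2 ++ w) ++ m0 ++ v ++ v2 = w2 ++ (w ++ m0 ++ v) ++ v2 by rewrite !catA.
  by rewrite G1 F1 mulrA.
move=> m Hm.
case: (classic (exists m1, m = w2 ++ m1 ++ v2)) => [[m1 E]|Hn].
  subst m; rewrite G1 F2 ?mulr0 ?subr0 //.
  move=> m0 E; apply: (Hm m0); by rewrite E !catA.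
apply: G2 => m0 E; apply: Hn; by exists m0.
Qed.

Lemma shift_LT (K : fieldType) (X : Type) (gt : seq X -> seq X -> Prop)
  (f gi : coeffs K X) c w v m :
  semigroup_wellorder gt ->
  is_poly gi -> is_LT gt gi m -> sub_shift f (fun _ => 0) c w gi v ->
  f (w++m++v) <> 0 -> is_LT gt f (w++m++v).
Proof.
case=> _ _ _ _ Hmon [Hg0 _] [Hm0 Hgm Hmax] /sub_shift0 [F1 F2] Hf; split => //.
  move=> E; apply: Hm0; move: E; clear; case: w => [|? ?] //=; case: m => [|? ?] //=.
move=> m' Hm'.
case: (classic (exists m1, m' = w ++ m1 ++ v)) => [[m1 E]|Hn]; last first.
  exfalso; apply: Hm'; apply: F2 => m0 E; apply: Hn; by exists m0.
subst m'.
have Hg1 : gi m1 <> 0 by move=> E; apply: Hm'; rewrite F1 E mulr0.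
case: (Hmax m1 Hg1) => [->|Hgt]; [by left | right].
apply: Hmon => //. by move=> E; apply: Hg1; rewrite E.
Qed.

Lemma core (K : fieldType) (X : Type) (gt : seq X -> seq X -> Prop)
  (g g' fo gi : coeffs K X) w v m w2 v2 mf :
  semigroup_wellorder gt ->
  is_poly gi -> is_monic gt fo -> is_LT gt gi m -> fo (w++m++v) <> 0 ->
  sub_shift fo (fun _ => 0) (fo (w++m++v)) w gi v ->
  is_LT gt fo mf -> g (w2++mf++v2) <> 0 ->
  sub_shift g g' (g (w2++mf++v2)) w2 fo v2 ->
  g ((w2++w)++m++(v++v2)) <> 0 /\
  sub_shift g g' (g ((w2++w)++m++(v++v2))) (w2++w) gi (v++v2).
Proof.
move=> Hord Hp Hmo Hm Hf Hs Hmf Hg Hgs.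
have L := shift_LT Hord Hp Hm Hs Hf.
have E := LT_unique Hord Hmf L.
have c1 : fo (w++m++v) = 1 by apply: monic_LT Hord Hmo L.
subst mf.
have -> : (w2++w)++m++(v++v2) = w2++(w++m++v)++v2 by rewrite !catA.
split => //.
have := shift_comp Hs Hgs; by rewrite c1 mulr1.
Qed.

Lemma tred_sub (K : fieldType) (X : Type) (gt : seq X -> seq X -> Prop)
  (F : mset K X) f g g' :
  tred gt (mremove F f) g g' -> tred gt F g g'.
Proof.
case: f => fo [[gi [Hi R]]|[gi [Hi R]]].
- left; exists gi; split => //; by case: Hi.
- right; exists gi; by split.
- left; exists gi; by split.
- right; exists gi; split => //; by case: Hi.
Qed.

Lemma step_sim (K : fieldType) (X : Type) (gt : seq X -> seq X -> Prop)
  (F : mset K X) f g g' :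
  semigroup_wellorder gt ->
  (forall g, mT F g -> is_poly g /\ is_monic gt g) ->
  (forall p, mP F p -> is_poly p /\ is_monic gt p) ->
  in_mset F f ->
  red_to_zero gt (mremove F f) f ->
  tred gt F g g' -> tred gt (mremove F f) g g'.
Proof.
move=> Hord HT HP.
case: f => fo /= Hin Hred.
- case=> [[gi0 [Hi0 [v2 [mf [Hmf [Hg Hgs]]]]]]|[gi0 [Hi0 R]]]; last first.
    right; exists gi0; by split.
  case: (classic (gi0 = fo)) => [E|NE]; last first.
    left; exists gi0; split; first by simpl; split.
    exists v2, mf; by split.
  subst gi0.
  have Hmo := (HT fo Hin).2.
  case: Hred => [[gi [[Hgi Hne] [v [m [Hm [Hf Hs]]]]]]|[gi [Hgi [w [v [m [Hm [Hf Hs]]]]]]]].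
  + left; exists gi; split; first by simpl; split.
    exists (v++v2), m.
    case: (@core _ _ _ g g' fo gi [::] v m [::] v2 mf Hord (HT gi Hgi).1 Hmo Hm Hf Hs Hmf Hg Hgs) => H1 H2.
    by split.
  + right; exists gi; split => //; exists w, (v++v2), m.
    case: (@core _ _ _ g g' fo gi w v m [::] v2 mf Hord (HP gi Hgi).1 Hmo Hm Hf Hs Hmf Hg Hgs) => H1 H2.
    by split.
- case=> [[gi0 [Hi0 R]]|[gi0 [Hi0 [w2 [v2 [mf [Hmf [Hg Hgs]]]]]]]].
    left; exists gi0; by split.
  case: (classic (gi0 = fo)) => [E|NE]; last first.
    right; exists gi0; split; first by simpl; split.
    exists w2, v2, mf; by split.
  subst gi0.
  have Hmo := (HP fo Hin).2.
  case: Hred => [gi [[Hgi Hne] [w [v [m [Hm [Hf Hs]]]]]]].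
  right; exists gi; split; first by simpl; split.
  exists (w2++w), (v++v2), m.
  case: (core Hord (HP gi Hgi).1 Hmo Hm Hf Hs Hmf Hg Hgs) => H1 H2.
  by split.
Qed.

Unset Implicit Arguments.

Theorem lemma4p8 (K : fieldType) (X : Type) (gt : seq X -> seq X -> Prop)
    (F : mset K X) (f : melem K X) :
  semigroup_wellorder gt ->
  (forall g, mT F g -> is_poly g /\ is_monic gt g) ->
  (forall p, mP F p -> is_poly p /\ is_monic gt p) ->
  in_mset F f ->
  red_to_zero gt (mremove F f) f ->
  forall g h : coeffs K X, is_poly g -> is_poly h ->
    (tred_star gt F g h <-> tred_star gt (mremove F f) g h).
Proof.
move=> Hord HT HP Hin Hred g h _ _; rewrite /tred_star; split;
  elim=> [x y Hxy| x | x y z _ IH1 _ IH2].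
- apply: rt_step; exact: step_sim Hord HT HP Hin Hred Hxy.
- exact: rt_refl.
- exact: rt_trans IH1 IH2.
- apply: rt_step; exact: tred_sub Hxy.
- exact: rt_refl.
- exact: rt_trans IH1 IH2.
Qed.
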